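(* Let $k$ be a field, let $d_1,\ldots,d_n$ be positive integers, let $m\ge 0$ be an integer, and let $f,h \in k[x_1, \dots ,x_n]$ be such that $h^mf \in (x_1^{d_1}, \ldots, x_n^{d_n})$. Then for every $j\in\{1,\ldots,n\}$, \[h^{m+1}f'_{x_j} \in (x_1^{\bar{d_1}}, \ldots , x_n^{\bar{d_n}}),\] where $\bar{d_j}=d_j-1$ and $\bar{d_i}=d_i$ for all $i \ne j$.
   Context: $f'_{x_j}$ denotes the formal partial derivative of the polynomial $f$ with respect to $x_j$. *)

(* Defs.v *)
From HB Require Import structures.
From mathcomp Require Import all_boot all_order all_algebra.
From mathcomp Require Import mpoly.

Set Implicit Arguments.
Unset Strict Implicit.
Unset Printing Implicit Defensive.
Import GRing.Theory.
Local Open Scope ring_scope.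

Definition in_ideal (R : comRingType) (n : nat)
    (gens : 'I_n -> {mpoly R[n]}) (p : {mpoly R[n]}) : Prop :=
  exists c : 'I_n -> {mpoly R[n]}, p = \sum_(i < n) c i * gens i.

Definition pow_ideal (R : comRingType) (n : nat) (e : 'I_n -> nat)
    (p : {mpoly R[n]}) : Prop :=
  in_ideal (fun i : 'I_n => ('X_i : {mpoly R[n]}) ^+ e i) p.

Definition dbar (n : nat) (d : 'I_n -> nat) (j : 'I_n) : 'I_n -> nat :=
  fun i => if i == j then (d i).-1 else d i.

(* Main.v *)
Require Import Defs.
From HB Require Import structures.
From mathcomp Require Import all_boot all_order all_algebra.
From mathcomp Require Import mpoly.
From mathcomp Require Import ring.
Import GRing.Theory.
Local Open Scope ring_scope.

Lemma dX_aux (k : fieldType) (n : nat) (i j : 'I_n) :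
  mderiv j ('X_i : {mpoly k[n]}) = (i == j)%:R.
Proof.
rewrite mderivX mnm1E; case: eqP => [->|_]; last by rewrite scale0r.
have -> : (U_(j) - U_(j))%MM = 0%MM by apply/mnmP => l; rewrite !mnmE subnn.
by rewrite mpolyX0 scale1r.
Qed.

Lemma dexp_aux (k : fieldType) (n : nat) (i : 'I_n) (p : {mpoly k[n]}) e :
  mderiv i (p ^+ e.+1) = e.+1%:R * p^+e * mderiv i p.
Proof.
elim: e => [|e IH]; first by rewrite expr1 expr0 mulr1 mul1r.
rewrite exprS mderivM IH !exprS. ring.
Qed.

Lemma dpow_aux (k : fieldType) (n : nat) (i : 'I_n) (h : {mpoly k[n]}) m :
  h * mderiv i (h ^+ m) = m%:R * h^+m * mderiv i h.
Proof.
case: m => [|e].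
  have -> : mderiv i (h ^+ 0) = 0 by rewrite expr0 -mpolyC1 mderivC.
  ring.
rewrite dexp_aux !exprS. ring.
Qed.

Theorem lemma2p1 (k : fieldType) (n : nat) (d : 'I_n -> nat)
    (hd : forall i, (0 < d i)%N) (m : nat) (f h : {mpoly k[n]}) :
  pow_ideal d (h ^+ m * f) ->
  forall j : 'I_n, pow_ideal (dbar d j) (h ^+ m.+1 * mderiv j f).
Proof.
move=> [c Hc] j.
have Hg : forall i : 'I_n, ('X_i : {mpoly k[n]}) ^+ d i
     = 'X_i ^+ (i == j) * 'X_i ^+ (dbar d j i).
  move=> i; rewrite -exprD /dbar; congr (_ ^+ _).
  by case: (i == j) => //=; rewrite add1n prednK.
have Hdg : forall i : 'I_n, mderiv j (('X_i : {mpoly k[n]}) ^+ d i)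
     = ((i == j)%:R * (d i)%:R) * 'X_i ^+ (dbar d j i).
  move=> i; have := hd i; case E: (d i) => [//|e] _.
  rewrite dexp_aux dX_aux /dbar E; case: (i == j) => /=.
    by rewrite mulr1 mul1r.
  by rewrite mulr0 !mul0r.
have Key : h ^+ m.+1 * mderiv j f
    = h * mderiv j (h ^+ m * f) - m%:R * mderiv j h * (h ^+ m * f).
  rewrite mderivM mulrDr (mulrA h (mderiv j (h ^+ m))) dpow_aux exprS; ring.
rewrite Key Hc.
exists (fun i => h * (mderiv j (c i) * 'X_i ^+ (i == j)
                 + c i * ((i == j)%:R * (d i)%:R))
                 - m%:R * mderiv j h * c i * 'X_i ^+ (i == j)).
rewrite raddf_sum (big_distrr h) (big_distrr (m%:R * mderiv j h)) -sumrB; apply: eq_bigr => i _ /=.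
rewrite mderivM Hdg Hg; ring.
Qed.
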